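(* The libraries $AbsQ$ and $AbsQ_0$ (defined in the context) have exactly the same set of histories: $AbsQ$ refines $AbsQ_0$ and $AbsQ_0$ refines $AbsQ$, i.e. $H(AbsQ)=H(AbsQ_0)$.
   Context: Fix a set $\mathit{Vals}$ of values containing a special value $\mathtt{EMPTY}$, take operation identifiers $\mathit{Ops}=\mathbb{N}$, and methods $\mathit{Methods}=\{enq,deq\}$. Call actions are $inv(m,d,k)$ and return actions $ret(m,d,k)$ ($m$ a method, $d$ a value, $k$ an operation identifier); $C$ and $R$ denote the sets of all call, resp. return, actions (the value field is omitted when irrelevant, e.g. $inv(deq,k)$, $ret(enq,k)$). A labeled transition system (LTS) $(Q,\Sigma,s_0,\delta)$ has states $Q$, alphabet $\Sigma$, initial state $s_0$ and transition relation $\delta\subseteq Q\times\Sigma\times Q$; a trace is the sequence of labels of a finite execution from $s_0$. The history set $H(L)$ of an LTS $L$ with $C\cup R\subseteq\Sigma$ is the set of projections of its traces onto $C\cup R$. $L_1$ refines $L_2$ iff $H(L_1)\subseteq H(L_2)$. For a partial function $f$, $f[x\mapsto y]$ is $f$ updated at $x$. $AbsQ_0$ (standard atomic queue): states are tuples $(\sigma,in,rv,cp)$ with $\sigma\in\mathit{Vals}^*$ and partial functions $in,rv:\mathit{Ops}\rightharpoonup\mathit{Vals}$, $cp:\mathit{Ops}\rightharpoonup\{A_1,A,A_2,R_1,R_2,R_3\}$; initially $\sigma=\epsilon$ and all functions empty. Transitions: $inv(enq,d,k)$ if $k\notin dom(cp)$, $d\ne\mathtt{EMPTY}$: set $in(k)=d$,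 $cp(k)=A_1$. $lin(enq,d,k)$ if $cp(k)=A_1$, $in(k)=d$: $\sigma:=d\cdot\sigma$, $cp(k)=A$. $ret(enq,k)$ if $cp(k)=A$: $cp(k)=A_2$. $inv(deq,k)$ if $k\notin dom(cp)$: $cp(k)=R_1$. $lin(deq,d,k)$ if $cp(k)=R_1$ and $\sigma=\sigma'\cdot d$: $\sigma:=\sigma'$, $rv(k)=d$, $cp(k)=R_2$. $lin(deq,\mathtt{EMPTY},k)$ if $cp(k)=R_1$ and $\sigma=\epsilon$: $rv(k)=\mathtt{EMPTY}$, $cp(k)=R_2$. $ret(deq,d,k)$ if $cp(k)=R_2$ and $rv(k)=d$: $cp(k)=R_3$. $AbsQ$: alphabet $C\cup R\cup Lin(deq)$ where $Lin(deq)=\{lin(deq,d,k)\}$. States are tuples $(O,<,\ell,rv,cp)$ with $O\subseteq\mathit{Ops}$, $<$ a strict partial order on $O$, $\ell:O\to\mathit{Vals}\times\{\mathtt{PEND},\mathtt{COMP}\}$ (write $\ell_1,\ell_2$ for its components), $rv:\mathit{Ops}\rightharpoonup\mathit{Vals}$, $cp:\mathit{Ops}\rightharpoonup\{A_1,A_2,R_1,R_2,R_3\}$; all components empty initially. Let $\mathtt{COMP}(O)=\{k\in O:\ell_2(k)=\mathtt{COMP}\}$, $min(O)$ the $<$-minimal elements of $O$, and $<\uparrow k'$ the relation $<$ with all pairs containing $k'$ removed. Transitions: $inv(enq,d,k)$ if $k\notin dom(cp)$, $d\ne\mathtt{EMPTY}$: $O:=O\cup\{k\}$, $<:=<\cup(\mathtt{COMP}(O)\times\{k\})$,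 $\ell(k)=(d,\mathtt{PEND})$, $cp(k)=A_1$. $inv(deq,k)$ if $k\notin dom(cp)$: $cp(k)=R_1$. $ret(deq,d,k)$ if $cp(k)=R_2$, $rv(k)=d$: $cp(k)=R_3$. $ret(enq,k)$ if $cp(k)=A_1$, $k\in O$, $\ell(k)=(d,\mathtt{PEND})$: $\ell(k)=(d,\mathtt{COMP})$, $cp(k)=A_2$. $ret(enq,k)$ if $cp(k)=A_1$, $k\notin O$: $cp(k)=A_2$. $lin(deq,d,k)$ if $cp(k)=R_1$, $d\ne\mathtt{EMPTY}$, and some $k'\in min(O)$ has $\ell_1(k')=d$: $O:=O\setminus\{k'\}$, $<:=<\uparrow k'$, $rv(k)=d$, $cp(k)=R_2$. $lin(deq,\mathtt{EMPTY},k)$ if $cp(k)=R_1$ and $\ell_2(o)=\mathtt{PEND}$ for all $o\in O$: $rv(k)=\mathtt{EMPTY}$, $cp(k)=R_2$. *)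

(* Defs.v *)
From Stdlib Require Import List Arith.
Import ListNotations.
Set Implicit Arguments.

(* Call actions:   InvEnq d k = inv(enq,d,k),  InvDeq k = inv(deq,k)
   Return actions: RetEnq k = ret(enq,k),      RetDeq d k = ret(deq,d,k)
   Linearization:  LinEnq d k = lin(enq,d,k),  LinDeq d k = lin(deq,d,k) *)
Inductive action (V : Type) : Type :=
| InvEnq (d : V) (k : nat)
| InvDeq (k : nat)
| RetEnq (k : nat)
| RetDeq (d : V) (k : nat)
| LinEnq (d : V) (k : nat)
| LinDeq (d : V) (k : nat).

Arguments InvDeq {V} k.
Arguments RetEnq {V} k.

Definition is_call_or_ret (V : Type) (a : action V) : bool :=
  match a with
  | InvEnq _ _ | InvDeq _ | RetEnq _ | RetDeq _ _ => true
  | _ => false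
  end.

Record LTS (V : Type) := mkLTS {
  lstate : Type;
  linit : lstate;
  lstep : lstate -> action V -> lstate -> Prop }.

Inductive exec (V : Type) (L : LTS V) : lstate L -> list (action V) -> lstate L -> Prop :=
| exec_nil : forall s, exec L s [] s
| exec_cons : forall s a s' tr s'',
    lstep L s a s' -> exec L s' tr s'' -> exec L s (a :: tr) s''.

Definition is_trace (V : Type) (L : LTS V) (tr : list (action V)) : Prop :=
  exists s, exec L (linit L) tr s.

Definition histories (V : Type) (L : LTS V) (h : list (action V)) : Prop :=
  exists tr, is_trace L tr /\ h = filter (@is_call_or_ret V) tr.

Definition refines (V : Type) (L1 L2 : LTS V) : Prop :=
  forall h, histories L1 h -> histories L2 h.

Definition upd (X : Type) (f : nat -> option X) (x : nat) (y : X) : nat -> option X :=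
  fun z => if Nat.eqb z x then Some y else f z.

Inductive cp0 := A1_0 | A_0 | A2_0 | R1_0 | R2_0 | R3_0.

Record st0 (V : Type) := mkSt0 {
  sigma0 : list V;            (* d . sigma is  d :: sigma *)
  in0 : nat -> option V;
  rv0 : nat -> option V;
  cpf0 : nat -> option cp0 }.

Inductive step0 (V : Type) (EMPTY : V) : st0 V -> action V -> st0 V -> Prop :=
| s0_inv_enq : forall sg i r c d k,
    c k = None -> d <> EMPTY ->
    step0 EMPTY (mkSt0 sg i r c) (InvEnq d k) (mkSt0 sg (upd i k d) r (upd c k A1_0))
| s0_lin_enq : forall sg i r c d k,
    c k = Some A1_0 -> i k = Some d ->
    step0 EMPTY (mkSt0 sg i r c) (LinEnq d k) (mkSt0 (d :: sg) i r (upd c k A_0))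
| s0_ret_enq : forall sg i r c k,
    c k = Some A_0 ->
    step0 EMPTY (mkSt0 sg i r c) (RetEnq k) (mkSt0 sg i r (upd c k A2_0))
| s0_inv_deq : forall sg i r c k,
    c k = None ->
    step0 EMPTY (mkSt0 sg i r c) (InvDeq k) (mkSt0 sg i r (upd c k R1_0))
| s0_lin_deq : forall sg' i r c d k,
    c k = Some R1_0 ->
    step0 EMPTY (mkSt0 (sg' ++ [d]) i r c) (LinDeq d k) (mkSt0 sg' i (upd r k d) (upd c k R2_0))
| s0_lin_deq_empty : forall i r c k,
    c k = Some R1_0 ->
    step0 EMPTY (mkSt0 [] i r c) (LinDeq EMPTY k) (mkSt0 [] i (upd r k EMPTY) (upd c k R2_0))
| s0_ret_deq : forall sg i r c d k,
    c k = Some R2_0 -> r k = Some d ->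
    step0 EMPTY (mkSt0 sg i r c) (RetDeq d k) (mkSt0 sg i r (upd c k R3_0)).

Definition AbsQ0 (V : Type) (EMPTY : V) : LTS V :=
  @mkLTS V (st0 V) (mkSt0 [] (fun _ => None) (fun _ => None) (fun _ => None)) (@step0 V EMPTY).

Inductive status := PEND | COMP.
Inductive cp1 := A1 | A2 | R1 | R2 | R3.

Record st1 (V : Type) := mkSt1 {
  O1 : nat -> Prop;
  lt1 : nat -> nat -> Prop;
  ell1 : nat -> option (V * status);
  rv1 : nat -> option V;
  cpf1 : nat -> option cp1 }.

Definition compO (V : Type) (O : nat -> Prop) (l : nat -> option (V * status)) (o : nat) : Prop :=
  O o /\ exists d, l o = Some (d, COMP).

Definition minO (O : nat -> Prop) (lt : nat -> nat -> Prop) (k : nat) : Prop :=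
  O k /\ ~ exists o, O o /\ lt o k.

Inductive step1 (V : Type) (EMPTY : V) : st1 V -> action V -> st1 V -> Prop :=
| s1_inv_enq : forall O lt l r c d k,
    c k = None -> d <> EMPTY ->
    step1 EMPTY (mkSt1 O lt l r c) (InvEnq d k)
      (mkSt1 (fun o => O o \/ o = k)
             (fun a b => lt a b \/ (compO O l a /\ b = k))
             (upd l k (d, PEND)) r (upd c k A1))
| s1_inv_deq : forall O lt l r c k,
    c k = None ->
    step1 EMPTY (mkSt1 O lt l r c) (InvDeq k) (mkSt1 O lt l r (upd c k R1))
| s1_ret_deq : forall O lt l r c d k,
    c k = Some R2 -> r k = Some d ->
    step1 EMPTY (mkSt1 O lt l r c) (RetDeq d k) (mkSt1 O lt l r (upd c k R3))
| s1_ret_enq_in : forall O lt l r c d k,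
    c k = Some A1 -> O k -> l k = Some (d, PEND) ->
    step1 EMPTY (mkSt1 O lt l r c) (RetEnq k) (mkSt1 O lt (upd l k (d, COMP)) r (upd c k A2))
| s1_ret_enq_out : forall O lt l r c k,
    c k = Some A1 -> ~ O k ->
    step1 EMPTY (mkSt1 O lt l r c) (RetEnq k) (mkSt1 O lt l r (upd c k A2))
| s1_lin_deq : forall O lt l r c d k k' st,
    c k = Some R1 -> d <> EMPTY -> minO O lt k' -> l k' = Some (d, st) ->
    step1 EMPTY (mkSt1 O lt l r c) (LinDeq d k)
      (mkSt1 (fun o => O o /\ o <> k')
             (fun a b => lt a b /\ a <> k' /\ b <> k')
             l (upd r k d) (upd c k R2))
| s1_lin_deq_empty : forall O lt l r c k,
    c k = Some R1 ->
    (forall o, O o -> exists d, l o = Some (d, PEND)) ->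
    step1 EMPTY (mkSt1 O lt l r c) (LinDeq EMPTY k) (mkSt1 O lt l (upd r k EMPTY) (upd c k R2)).

Definition AbsQ (V : Type) (EMPTY : V) : LTS V :=
  @mkLTS V (st1 V)
    (mkSt1 (fun _ => False) (fun _ _ => False) (fun _ => None) (fun _ => None) (fun _ => None))
    (@step1 V EMPTY).

(* Main.v *)
Require Import Defs.
From Stdlib Require Import List Arith Lia Classical FunctionalExtensionality ClassicalEpsilon.
Import ListNotations.
Set Implicit Arguments.

Lemma exec_app {V} (L : LTS V) s t1 s' t2 s'' :
  exec L s t1 s' -> exec L s' t2 s'' -> exec L s (t1 ++ t2) s''.
Proof. induction 1; simpl; auto. intros; econstructor; eauto. Qed.

Lemma exec_one {V} (L : LTS V) s a s' : lstep L s a s' -> exec L s [a] s'.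
Proof. intros; econstructor; eauto; constructor. Qed.

Lemma exec_snoc_inv {V} (L : LTS V) s t a s'' :
  exec L s (t ++ [a]) s'' -> exists s', exec L s t s' /\ lstep L s' a s''.
Proof.
  revert s. induction t; simpl; intros s H.
  - inversion H; subst. inversion H5; subst. exists s; split; auto. constructor.
  - inversion H; subst. destruct (IHt _ H5) as [x [Hx1 Hx2]].
    exists x; split; auto. econstructor; eauto.
Qed.

Lemma upd_eq {X} (f : nat -> option X) k y : upd f k y k = Some y.
Proof. unfold upd; rewrite Nat.eqb_refl; auto. Qed.
Lemma upd_neq {X} (f : nat -> option X) k y z : z <> k -> upd f k y z = f z.
Proof. unfold upd; intros; destruct (Nat.eqb_spec z k); congruence. Qed.

Definition cpmap (x : cp0) : cp1 :=
  match x with A1_0 | A_0 => A1 | A2_0 => A2 | R1_0 => R1 | R2_0 => R2 | R3_0 => R3 end.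

Definition FR {V} (EMPTY : V) (s0 : st0 V) (s1 : st1 V) : Prop :=
 exists ids : list nat,
  Forall2 (fun k d => in0 s0 k = Some d) ids (sigma0 s0) /\
  NoDup ids /\
  (forall k, rv1 s1 k = rv0 s0 k) /\
  (forall k, cpf1 s1 k = option_map cpmap (cpf0 s0 k)) /\
  (forall k, O1 s1 k <-> In k ids \/ cpf0 s0 k = Some A1_0) /\
  (forall k, In k ids -> cpf0 s0 k = Some A_0 \/ cpf0 s0 k = Some A2_0) /\
  (forall k, cpf0 s0 k = Some A1_0 \/ cpf0 s0 k = Some A_0 \/ cpf0 s0 k = Some A2_0 ->
     exists d st, in0 s0 k = Some d /\ ell1 s1 k = Some (d, st) /\ d <> EMPTY /\
        (O1 s1 k -> (st = COMP <-> cpf0 s0 k = Some A2_0))) /\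
  (forall a b, lt1 s1 a b -> In a ids /\ forall m1 m2, ids = m1 ++ b :: m2 -> In a m2).

Lemma FR_intro {V} (EMPTY : V) s0 s1 ids :
  Forall2 (fun k d => in0 s0 k = Some d) ids (sigma0 s0) ->
  NoDup ids ->
  (forall k, rv1 s1 k = rv0 s0 k) ->
  (forall k, cpf1 s1 k = option_map cpmap (cpf0 s0 k)) ->
  (forall k, O1 s1 k <-> In k ids \/ cpf0 s0 k = Some A1_0) ->
  (forall k, In k ids -> cpf0 s0 k = Some A_0 \/ cpf0 s0 k = Some A2_0) ->
  (forall k, cpf0 s0 k = Some A1_0 \/ cpf0 s0 k = Some A_0 \/ cpf0 s0 k = Some A2_0 ->
     exists d st, in0 s0 k = Some d /\ ell1 s1 k = Some (d, st) /\ d <> EMPTY /\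
        (O1 s1 k -> (st = COMP <-> cpf0 s0 k = Some A2_0))) ->
  (forall a b, lt1 s1 a b -> In a ids) ->
  (forall a b m1 m2, lt1 s1 a b -> ids = m1 ++ b :: m2 -> In a m2) ->
  FR EMPTY s0 s1.
Proof. intros. exists ids. do 7 (split; [eauto|]). intros a b Hab; split; eauto. Qed.

Lemma Forall2_impl_in {A B} (P Q : A -> B -> Prop) l1 l2 :
  Forall2 P l1 l2 -> (forall x y, In x l1 -> P x y -> Q x y) -> Forall2 Q l1 l2.
Proof. induction 1; constructor; simpl in *; auto. Qed.

Lemma fwd_step {V} (EMPTY : V) s0 act s0' s1 :
  step0 EMPTY s0 act s0' -> FR EMPTY s0 s1 ->
  exists tr s1', exec (AbsQ EMPTY) s1 tr s1' /\
     filter (@is_call_or_ret V) tr = filter (@is_call_or_ret V) [act] /\ FR EMPTY s0' s1'.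
Proof.
  intros Hs HF. destruct s1 as [O lt l r1 c1].
  destruct Hs; destruct HF as (ids & Hsg & Hnd & Hr & Hc & HO & Hid & Hl & Hlt); simpl in *.
  -
    assert (Hk : ~ In k ids) by (intro Hin; destruct (Hid _ Hin); congruence).
    eexists [InvEnq d k], _; split; [apply exec_one; simpl; constructor|split; [reflexivity|]].
    + rewrite Hc, H; reflexivity.
    + exact H0.
    + apply FR_intro with (ids := ids); simpl.
      * eapply Forall2_impl_in; [exact Hsg|]. intros x y Hx Hxy. rewrite upd_neq; auto. congruence.
      * exact Hnd.
      * exact Hr.
      * intro z. destruct (Nat.eq_dec z k); [subst; rewrite !upd_eq; auto| rewrite !upd_neq; auto].
      * intro z; split.
        -- intros [Hz|Hz]; [apply HO in Hz; destruct Hz as [Hz|Hz]; [left; auto|]|].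
           ++ right. destruct (Nat.eq_dec z k); [subst; congruence|rewrite upd_neq; auto].
           ++ right; subst; apply upd_eq.
        -- intros [Hz|Hz]; [left; apply HO; auto|].
           destruct (Nat.eq_dec z k); [right; auto|left; rewrite upd_neq in Hz; auto; apply HO; auto].
      * intros z Hz. rewrite upd_neq; [auto|congruence].
      * intros z Hz. destruct (Nat.eq_dec z k).
        -- subst. exists d, PEND. rewrite !upd_eq. repeat split; auto; intros; congruence.
        -- rewrite !upd_neq in * by auto. destruct (Hl z Hz) as (d' & st & E1 & E2 & E3 & E4).
           exists d', st; split; [auto|split; [auto|split; [auto|]]].
           intros [Hz'|Hz']; [apply E4; auto|congruence].
      * intros a0 b0 [Hab|[[Ha [d' Hd']] Hb]]; [exact (proj1 (Hlt _ _ Hab))|].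
        apply HO in Ha. destruct Ha as [Ha|Ha]; auto.
        destruct (Hl a0 (or_introl Ha)) as (d'' & st & E1 & E2 & E3 & E4).
        assert (st = COMP) by (rewrite Hd' in E2; congruence).
        apply E4 in H1; [congruence|]. apply HO; auto.
      * intros a0 b0 m1 m2 [Hab|[[Ha [d' Hd']] Hb]] Hm; [exact (proj2 (Hlt _ _ Hab) _ _ Hm)|].
        subst b0. exfalso; apply Hk; rewrite Hm; apply in_or_app; right; left; auto.
  -
    assert (Hk : ~ In k ids) by (intro Hin; destruct (Hid _ Hin); congruence).
    exists [], (mkSt1 O lt l r1 c1); split; [constructor|split; [reflexivity|]].
    apply FR_intro with (ids := k :: ids); simpl.
    + constructor; auto.
    + constructor; auto.
    + exact Hr.
    + intro z. destruct (Nat.eq_dec z k); [subst; rewrite !upd_eq, Hc, H; auto| rewrite !upd_neq; auto].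
    + intro z; rewrite HO; destruct (Nat.eq_dec z k).
      * subst; rewrite upd_eq; tauto.
      * rewrite upd_neq by auto. intuition congruence.
    + intros z [Hz|Hz]; [subst; rewrite upd_eq; auto|].
      rewrite upd_neq by congruence. auto.
    + intros z Hz. destruct (Nat.eq_dec z k).
      * subst. destruct (Hl k (or_introl H)) as (d' & st & E1 & E2 & E3 & E4).
        exists d', st; rewrite upd_eq; repeat split; auto.
        -- intros; rewrite E4 in *; auto; congruence.
        -- intros; congruence.
      * rewrite upd_neq in * by auto. auto.
    + intros a0 b0 Hab; right; exact (proj1 (Hlt _ _ Hab)).
    + intros a0 b0 m1 m2 Hab Hm. destruct m1 as [|x m1]; simpl in Hm; injection Hm; intros; subst.
      * exact (proj1 (Hlt _ _ Hab)).
      * exact (proj2 (Hlt _ _ Hab) _ _ eq_refl).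
  -
    destruct (Hl k (or_intror (or_introl H))) as (d & st & E1 & E2 & E3 & E4).
    destruct (classic (O k)) as [HOk|HOk].
    + assert (st = PEND) by (destruct st; auto; apply E4 in HOk; destruct HOk as [X _]; specialize (X eq_refl); congruence).
      subst st.
      eexists [RetEnq k], _; split; [apply exec_one; simpl; eapply s1_ret_enq_in; eauto|split; [reflexivity|]].
      { rewrite Hc, H; reflexivity. }
      apply FR_intro with (ids := ids); simpl; auto.
      * intro z. destruct (Nat.eq_dec z k); [subst; rewrite !upd_eq; auto| rewrite !upd_neq; auto].
      * intro z; rewrite HO; destruct (Nat.eq_dec z k).
        -- subst; rewrite upd_eq, H; intuition congruence.
        -- rewrite upd_neq by auto. tauto.
      * intros z Hz. destruct (Nat.eq_dec z k); [subst; rewrite upd_eq; auto|].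
        rewrite upd_neq by auto. auto.
      * intros z Hz. destruct (Nat.eq_dec z k).
        -- subst. exists d, COMP; rewrite !upd_eq; repeat split; auto.
        -- rewrite !upd_neq in * by auto. auto.
      * intros a0 b0 Hab; exact (proj1 (Hlt _ _ Hab)).
      * intros a0 b0 m1 m2 Hab Hm; exact (proj2 (Hlt _ _ Hab) _ _ Hm).
    + eexists [RetEnq k], _; split; [apply exec_one; simpl; eapply s1_ret_enq_out; eauto|split; [reflexivity|]].
      { rewrite Hc, H; reflexivity. }
      apply FR_intro with (ids := ids); simpl; auto.
      * intro z. destruct (Nat.eq_dec z k); [subst; rewrite !upd_eq; auto| rewrite !upd_neq; auto].
      * intro z; rewrite HO; destruct (Nat.eq_dec z k).
        -- subst; rewrite upd_eq, H; intuition congruence.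
        -- rewrite upd_neq by auto. tauto.
      * intros z Hz. destruct (Nat.eq_dec z k); [subst; rewrite upd_eq; auto|].
        rewrite upd_neq by auto. auto.
      * intros z Hz. destruct (Nat.eq_dec z k).
        -- subst. exists d, st; rewrite !upd_eq; repeat split; auto; intros; contradiction.
        -- rewrite !upd_neq in * by auto. auto.
      * intros a0 b0 Hab; exact (proj1 (Hlt _ _ Hab)).
      * intros a0 b0 m1 m2 Hab Hm; exact (proj2 (Hlt _ _ Hab) _ _ Hm).
  -
    assert (Hk : ~ In k ids) by (intro Hin; destruct (Hid _ Hin); congruence).
    eexists [InvDeq k], _; split; [apply exec_one; simpl; eapply s1_inv_deq; eauto|split; [reflexivity|]].
    { rewrite Hc, H; reflexivity. }
    apply FR_intro with (ids := ids); simpl; auto.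
    + intro z. destruct (Nat.eq_dec z k); [subst; rewrite !upd_eq; auto| rewrite !upd_neq; auto].
    + intro z; rewrite HO; destruct (Nat.eq_dec z k).
      * subst; rewrite upd_eq, H; intuition congruence.
      * rewrite upd_neq by auto. tauto.
    + intros z Hz. destruct (Nat.eq_dec z k); [subst; contradiction|].
      rewrite upd_neq by auto. auto.
    + intros z Hz. destruct (Nat.eq_dec z k).
      * subst. rewrite upd_eq in Hz; intuition congruence.
      * rewrite !upd_neq in * by auto. auto.
    + intros a0 b0 Hab; exact (proj1 (Hlt _ _ Hab)).
    + intros a0 b0 m1 m2 Hab Hm; exact (proj2 (Hlt _ _ Hab) _ _ Hm).
  -
    apply Forall2_app_inv_r in Hsg. destruct Hsg as (l1 & l2 & F1 & F2 & Eids).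
    inversion F2 as [|k' d0 l2' l2'' Hk' F3]; subst. inversion F3; subst.
    assert (Hk'in : In k' (l1 ++ [k'])) by (apply in_or_app; right; left; auto).
    destruct (Hl k' (or_intror (Hid _ Hk'in))) as (d' & st & E1 & E2 & E3 & E4).
    rewrite Hk' in E1; injection E1; intros; subst d'.
    assert (Hkk : k <> k') by (intro; subst; destruct (Hid _ Hk'in); congruence).
    assert (Hkin : ~ In k (l1 ++ [k'])) by (intro Hin; destruct (Hid _ Hin); congruence).
    assert (Hnd1 := NoDup_remove _ [] _ Hnd). rewrite app_nil_r in Hnd1. destruct Hnd1 as [Hnd1 Hk'l1].
    eexists [LinDeq d k], _; split; [apply exec_one; simpl; eapply s1_lin_deq; eauto|split; [reflexivity|]].
    { rewrite Hc, H; reflexivity. }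
    { split; [apply HO; auto|]. intros [o [Ho Hlto]].
      destruct (Hlt _ _ Hlto) as [_ X]. specialize (X l1 [] eq_refl). destruct X. }
    apply FR_intro with (ids := l1); simpl; auto.
    + intro z. destruct (Nat.eq_dec z k); [subst; rewrite !upd_eq; auto| rewrite !upd_neq; auto].
    + intro z. destruct (Nat.eq_dec z k); [subst; rewrite !upd_eq; auto| rewrite !upd_neq; auto].
    + intro z. destruct (Nat.eq_dec z k).
      * subst. rewrite upd_eq, HO. split; [intros [[X|X] _]; [contradiction|congruence]|].
        intros [X|X]; [exfalso; apply Hkin; apply in_or_app; auto|congruence].
      * rewrite upd_neq by auto. rewrite HO. split.
        -- intros [[X|X] Y]; [|auto]. apply in_app_or in X; destruct X as [X|[X|[]]]; [auto|congruence].
        -- intros [X|X]; split.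
           ++ left; apply in_or_app; auto.
           ++ intro; subst; contradiction.
           ++ auto.
           ++ intro; subst. destruct (Hid _ Hk'in); congruence.
    + intros z Hz. rewrite upd_neq. apply Hid; apply in_or_app; auto.
      intro; subst; apply Hkin; apply in_or_app; auto.
    + intros z Hz. destruct (Nat.eq_dec z k).
      * subst. rewrite upd_eq in Hz; intuition congruence.
      * rewrite !upd_neq in * by auto. destruct (Hl z Hz) as (d1 & st1 & G1 & G2 & G3 & G4).
        exists d1, st1; split; [auto|split; [auto|split; [auto|]]]. intros [Y1 Y2]; apply G4; auto.
    + intros a0 b0 [Hab [Ha Hb]]. destruct (Hlt _ _ Hab) as [X _].
      apply in_app_or in X; destruct X as [X|[X|[]]]; [auto|congruence].
    + intros a0 b0 m1 m2 [Hab [Ha Hb]] Hm. destruct (Hlt _ _ Hab) as [_ X].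
      specialize (X m1 (m2 ++ [k'])). rewrite Hm in X. rewrite <- app_assoc in X. simpl in X.
      specialize (X eq_refl). apply in_app_or in X; destruct X as [X|[X|[]]]; [auto|congruence].
  -
    inversion Hsg; subst.
    eexists [LinDeq EMPTY k], _; split; [apply exec_one; simpl; eapply s1_lin_deq_empty; eauto|split; [reflexivity|]].
    { rewrite Hc, H; reflexivity. }
    { intros o Ho. assert (Hco : c o = Some A1_0) by (apply HO in Ho; destruct Ho as [[]|]; auto).
      destruct (Hl o (or_introl Hco)) as (d1 & st1 & G1 & G2 & G3 & G4).
      exists d1. destruct st1; auto. destruct (G4 Ho) as [X _]; specialize (X eq_refl); congruence. }
    apply FR_intro with (ids := []); simpl; auto.
    + intro z. destruct (Nat.eq_dec z k); [subst; rewrite !upd_eq; auto| rewrite !upd_neq; auto].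
    + intro z. destruct (Nat.eq_dec z k); [subst; rewrite !upd_eq; auto| rewrite !upd_neq; auto].
    + intro z. destruct (Nat.eq_dec z k).
      * subst. rewrite upd_eq, HO. rewrite H. intuition congruence.
      * rewrite upd_neq by auto. auto.
    + intros z [].
    + intros z Hz. destruct (Nat.eq_dec z k).
      * subst. rewrite upd_eq in Hz; intuition congruence.
      * rewrite !upd_neq in * by auto. auto.
    + intros a0 b0 Hab. exact (proj1 (Hlt _ _ Hab)).
    + intros a0 b0 m1 m2 Hab Hm. destruct m1; discriminate.
  -
    assert (Hk : ~ In k ids) by (intro Hin; destruct (Hid _ Hin); congruence).
    eexists [RetDeq d k], _; split; [apply exec_one; simpl; eapply s1_ret_deq; eauto|split; [reflexivity|]].
    { rewrite Hc, H; reflexivity. }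
    { rewrite Hr; auto. }
    apply FR_intro with (ids := ids); simpl; auto.
    + intro z. destruct (Nat.eq_dec z k); [subst; rewrite !upd_eq; auto| rewrite !upd_neq; auto].
    + intro z; rewrite HO; destruct (Nat.eq_dec z k).
      * subst; rewrite upd_eq, H; intuition congruence.
      * rewrite upd_neq by auto. tauto.
    + intros z Hz. destruct (Nat.eq_dec z k); [subst; contradiction|].
      rewrite upd_neq by auto. auto.
    + intros z Hz. destruct (Nat.eq_dec z k).
      * subst. rewrite upd_eq in Hz; intuition congruence.
      * rewrite !upd_neq in * by auto. auto.
    + intros a0 b0 Hab; exact (proj1 (Hlt _ _ Hab)).
    + intros a0 b0 m1 m2 Hab Hm; exact (proj2 (Hlt _ _ Hab) _ _ Hm).
Qed.

Lemma fwd_exec {V} (EMPTY : V) s0 tr s0' :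
  exec (AbsQ0 EMPTY) s0 tr s0' -> forall s1, FR EMPTY s0 s1 ->
  exists tr1 s1', exec (AbsQ EMPTY) s1 tr1 s1' /\
     filter (@is_call_or_ret V) tr1 = filter (@is_call_or_ret V) tr.
Proof.
  induction 1; intros s1 HF.
  - exists [], s1; split; [constructor|reflexivity].
  - destruct (fwd_step H HF) as (t1 & s1' & X1 & X2 & X3).
    destruct (IHexec _ X3) as (t2 & s1'' & Y1 & Y2).
    exists (t1 ++ t2), s1''; split; [eapply exec_app; eauto|].
    rewrite filter_app, X2, Y2. change (a :: tr) with ([a] ++ tr). rewrite filter_app. reflexivity.
Qed.

Lemma refines_0_1 {V} (EMPTY : V) : refines (AbsQ0 EMPTY) (AbsQ EMPTY).
Proof.
  intros h [tr [[s Hs] Hh]].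
  assert (HF : FR EMPTY (linit (AbsQ0 EMPTY)) (linit (AbsQ EMPTY))).
  { apply FR_intro with (ids := []); simpl; auto; try (intros; tauto); try constructor.
    all: try tauto. all: try (intros [X|X]; [contradiction|discriminate]). intros kk [X|[X|X]]; discriminate. }
  destruct (fwd_exec Hs HF) as (tr1 & s1 & E1 & E2).
  exists tr1; split; [exists s1; auto|congruence].
Qed.

Fixpoint ordok (lt : nat -> nat -> Prop) (l : list nat) : Prop :=
  match l with [] => True | b :: rest => (forall a, lt a b -> In a rest) /\ ordok lt rest end.

Lemma ordok_mono lt lt' l :
  ordok lt l -> (forall a b, In b l -> lt' a b -> lt a b) -> ordok lt' l.
Proof.
  induction l as [|b l IH]; simpl; auto. intros [H1 H2] H. split.
  - intros a Hab. apply H1. apply (H a b); auto.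
  - apply IH; auto.
Qed.

Lemma ordok_app_r lt l1 l2 : ordok lt (l1 ++ l2) -> ordok lt l2.
Proof. induction l1; simpl; tauto. Qed.

Lemma ordok_in lt l1 b l2 a : ordok lt (l1 ++ b :: l2) -> lt a b -> In a l2.
Proof. intros H Hab. apply ordok_app_r in H. simpl in H. apply H; auto. Qed.

Lemma ordok_filter lt lt' f l :
  ordok lt l -> (forall a b, lt' a b -> lt a b /\ f a = true) -> ordok lt' (filter f l).
Proof.
  induction l as [|b l IH]; simpl; auto. intros [H1 H2] H.
  destruct (f b); simpl; auto. split; auto.
  intros a Hab. destruct (H _ _ Hab). apply filter_In; auto.
Qed.

Lemma ordok_snoc lt lt' l k' :
  ordok lt' l -> (forall a b, In b l -> lt a b -> a = k' \/ lt' a b) ->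
  (forall a, ~ lt a k') -> ordok lt (l ++ [k']).
Proof.
  induction l as [|b l IH]; simpl; intros H1 H2 H3.
  - split; auto; intros a Hab; exfalso; eapply H3; eauto.
  - destruct H1 as [H1 H1']. split.
    + intros a Hab. destruct (H2 a b (or_introl eq_refl) Hab) as [E|E].
      * subst; apply in_or_app; right; left; auto.
      * apply in_or_app; left; auto.
    + apply IH; auto.
Qed.

Definition cprel (Ok Ink : Prop) (c : option cp1) (c0 : option cp0) : Prop :=
  match c with
  | None => c0 = None
  | Some R1 => c0 = Some R1_0
  | Some R2 => c0 = Some R2_0
  | Some R3 => c0 = Some R3_0
  | Some A2 => c0 = Some A2_0 /\ (Ok -> Ink)
  | Some A1 => (Ok /\ ~ Ink /\ c0 = Some A1_0) \/ (Ink /\ c0 = Some A_0) \/ (~ Ok /\ c0 = Some A_0)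
  end.

Lemma cprel_iff P P' I I' c c0 : (P <-> P') -> (I <-> I') -> cprel P I c c0 -> cprel P' I' c c0.
Proof. intros H1 H2. destruct c as [[]|]; simpl; tauto. Qed.

Definition InvS1 {V} (s1 : st1 V) : Prop :=
  (forall k, O1 s1 k -> cpf1 s1 k = Some A1 \/ cpf1 s1 k = Some A2) /\
  (forall k, O1 s1 k -> exists d st, ell1 s1 k = Some (d, st) /\ (st = COMP <-> cpf1 s1 k = Some A2)) /\
  (forall a b, lt1 s1 a b -> O1 s1 a /\ O1 s1 b /\ cpf1 s1 a = Some A2) /\
  (exists rl, NoDup rl /\ (forall k, In k rl <-> O1 s1 k /\ cpf1 s1 k = Some A2) /\ ordok (lt1 s1) rl) /\
  (forall k, cpf1 s1 k = Some A1 \/ cpf1 s1 k = Some A2 -> exists p, ell1 s1 k = Some p).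

Definition encl {V} (c : option cp1) (i : option V) (l : option (V * status)) : Prop :=
  match c with
  | Some A1 | Some A2 => exists d st, i = Some d /\ l = Some (d, st)
  | _ => i = None
  end.

Definition BR {V} (s1 : st1 V) (s0 : st0 V) : Prop :=
  exists ids,
    Forall2 (fun k d => in0 s0 k = Some d) ids (sigma0 s0) /\
    NoDup ids /\
    rv0 s0 = rv1 s1 /\
    (forall k, In k ids -> O1 s1 k) /\
    (forall k, cprel (O1 s1 k) (In k ids) (cpf1 s1 k) (cpf0 s0 k)) /\
    (forall k, encl (cpf1 s1 k) (in0 s0 k) (ell1 s1 k)) /\
    ordok (lt1 s1) ids.

Lemma exec_eq {V} (L : LTS V) s tr x y : exec L s tr x -> x = y -> exec L s tr y.
Proof. intros; subst; auto. Qed.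

Lemma linenqs {V} (EMPTY : V) (l : list nat) : forall sgl sg i r c,
  NoDup l -> Forall2 (fun k d => i k = Some d) l sgl -> (forall z, In z l -> c z = Some A1_0) ->
  exists tr, exec (AbsQ0 EMPTY) (mkSt0 sg i r c) tr
     (mkSt0 (sgl ++ sg) i r (fun z => if in_dec Nat.eq_dec z l then Some A_0 else c z)) /\
   filter (@is_call_or_ret V) tr = [].
Proof.
  induction l as [|z l IH]; intros sgl sg i r c Hnd HF Hc.
  - inversion HF; subst. exists []; split; auto. apply exec_eq with (mkSt0 sg i r c); [constructor|].
    reflexivity.
  - inversion HF as [|z' d l' sgl' Hz HF']; subst. inversion Hnd; subst.
    destruct (IH sgl' sg i r c H2 HF') as (tr & E1 & E2); [intros; apply Hc; simpl; auto|].
    exists (tr ++ [LinEnq d z]); split.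
    + eapply exec_app; [exact E1|]. apply exec_eq with
        (mkSt0 (d :: sgl' ++ sg) i r (upd (fun z0 => if in_dec Nat.eq_dec z0 l then Some A_0 else c z0) z A_0)).
      * apply exec_one. simpl. constructor; auto.
        destruct (in_dec Nat.eq_dec z l); [contradiction|]. apply Hc; simpl; auto.
      * f_equal. extensionality y. unfold upd.
        destruct (Nat.eqb_spec y z); subst.
        -- destruct (in_dec Nat.eq_dec z (z :: l)) as [|nn]; auto. exfalso; apply nn; simpl; auto.
        -- destruct (in_dec Nat.eq_dec y l) as [Y1|Y1]; destruct (in_dec Nat.eq_dec y (z :: l)) as [Y2|Y2]; auto.
           ++ exfalso; apply Y2; simpl; auto.
           ++ simpl in Y2; destruct Y2; [congruence|contradiction].


    + rewrite filter_app, E2. reflexivity.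
Qed.

Lemma InvS1_intro {V} (s1 : st1 V) rl :
  (forall k, O1 s1 k -> cpf1 s1 k = Some A1 \/ cpf1 s1 k = Some A2) ->
  (forall k, O1 s1 k -> exists d st, ell1 s1 k = Some (d, st) /\ (st = COMP <-> cpf1 s1 k = Some A2)) ->
  (forall a b, lt1 s1 a b -> O1 s1 a /\ O1 s1 b /\ cpf1 s1 a = Some A2) ->
  NoDup rl -> (forall k, In k rl <-> O1 s1 k /\ cpf1 s1 k = Some A2) -> ordok (lt1 s1) rl ->
  (forall k, cpf1 s1 k = Some A1 \/ cpf1 s1 k = Some A2 -> exists p, ell1 s1 k = Some p) ->
  InvS1 s1.
Proof. intros. split; [auto|split; [auto|split; [auto|split; [exists rl; auto|auto]]]]. Qed.

Lemma inv_step {V} (EMPTY : V) s a s' : InvS1 s -> step1 EMPTY s a s' -> InvS1 s'.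
Proof.
  intros HI Hs.
  destruct Hs; destruct HI as (I1 & I2 & I3 & (rl & Hnd & Hrl & Hord) & I5); simpl in *.
  -
    assert (HOk : ~ O k) by (intro X; destruct (I1 _ X); congruence).
    apply InvS1_intro with (rl := rl); simpl; auto.
    + intros z [Hz|Hz]; [destruct (Nat.eq_dec z k); [subst; contradiction|rewrite upd_neq; auto]|subst; rewrite upd_eq; auto].
    + intros z [Hz|Hz].
      * destruct (Nat.eq_dec z k); [subst; contradiction|rewrite !upd_neq; auto].
      * subst; rewrite !upd_eq. exists d, PEND; split; auto; split; intros; congruence.
    + intros a0 b0 [Hab|[[Ha [d' Hd']] Hb]].
      * destruct (I3 _ _ Hab) as (X1 & X2 & X3).
        rewrite upd_neq by (intro; subst; contradiction). auto.
      * subst b0. destruct (I2 _ Ha) as (d1 & st1 & G1 & G2). rewrite Hd' in G1; injection G1; intros; subst.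
        rewrite upd_neq by (intro; subst; contradiction). split; auto. split; auto. apply G2; auto.
    + intro z. rewrite Hrl. destruct (Nat.eq_dec z k).
      * subst. rewrite upd_eq. split; [intros [X _]; contradiction|intros [_ X]; discriminate].
      * rewrite upd_neq by auto. split; [intros [X Y]; auto|intros [[X|X] Y]; auto; contradiction].
    + apply ordok_mono with lt; auto. intros a0 b0 Hb [Hab|[_ Hbk]]; auto.
      subst. apply Hrl in Hb. destruct Hb; contradiction.
    + intros z Hz. destruct (Nat.eq_dec z k); [subst; rewrite upd_eq; eauto|].
      rewrite !upd_neq in * by auto. auto.
  -
    assert (HOk : ~ O k) by (intro X; destruct (I1 _ X); congruence).
    apply InvS1_intro with (rl := rl); simpl; auto.
    + intros z Hz. rewrite upd_neq; [auto|intro; subst; contradiction].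
    + intros z Hz. rewrite upd_neq; [auto|intro; subst; contradiction].
    + intros a0 b0 Hab. destruct (I3 _ _ Hab) as (X1 & X2 & X3).
      rewrite upd_neq by (intro; subst; contradiction). auto.
    + intro z. rewrite Hrl. destruct (Nat.eq_dec z k).
      * subst. rewrite upd_eq. split; [intros [X _]; contradiction|intros [_ X]; discriminate].
      * rewrite upd_neq by auto. tauto.
    + intros z Hz. destruct (Nat.eq_dec z k); [subst; rewrite upd_eq in Hz; destruct Hz; discriminate|].
      rewrite !upd_neq in * by auto. auto.
  -
    assert (HOk : ~ O k) by (intro X; destruct (I1 _ X); congruence).
    apply InvS1_intro with (rl := rl); simpl; auto.
    + intros z Hz. rewrite upd_neq; [auto|intro; subst; contradiction].
    + intros z Hz. rewrite upd_neq; [auto|intro; subst; contradiction].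
    + intros a0 b0 Hab. destruct (I3 _ _ Hab) as (X1 & X2 & X3).
      rewrite upd_neq by (intro; subst; contradiction). auto.
    + intro z. rewrite Hrl. destruct (Nat.eq_dec z k).
      * subst. rewrite upd_eq. split; [intros [X _]; contradiction|intros [_ X]; discriminate].
      * rewrite upd_neq by auto. tauto.
    + intros z Hz. destruct (Nat.eq_dec z k); [subst; rewrite upd_eq in Hz; destruct Hz; discriminate|].
      rewrite !upd_neq in * by auto. auto.
  -
    assert (Hkrl : ~ In k rl) by (intro X; apply Hrl in X; destruct X; congruence).
    apply InvS1_intro with (rl := k :: rl); simpl; auto.
    + intros z Hz. destruct (Nat.eq_dec z k); [subst; rewrite upd_eq; auto|rewrite upd_neq; auto].
    + intros z Hz. destruct (Nat.eq_dec z k).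
      * subst; rewrite !upd_eq. exists d, COMP; split; auto; split; auto.
      * rewrite !upd_neq by auto. auto.
    + intros a0 b0 Hab. destruct (I3 _ _ Hab) as (X1 & X2 & X3).
      destruct (Nat.eq_dec a0 k); [subst; rewrite upd_eq; auto|rewrite upd_neq; auto].
    + constructor; auto.
    + intro z. destruct (Nat.eq_dec z k).
      * subst. rewrite upd_eq. tauto.
      * rewrite upd_neq by auto. rewrite <- Hrl. split; [intros [X|X]; auto; congruence|auto].
    + split.
      * intros a0 Hab. apply Hrl. destruct (I3 _ _ Hab) as (X1 & X2 & X3). auto.
      * auto.
    + intros z Hz. destruct (Nat.eq_dec z k); [subst; rewrite upd_eq; eauto|].
      rewrite !upd_neq in * by auto. auto.
  -
    apply InvS1_intro with (rl := rl); simpl; auto.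
    + intros z Hz. rewrite upd_neq; [auto|intro; subst; contradiction].
    + intros z Hz. rewrite upd_neq; [auto|intro; subst; contradiction].
    + intros a0 b0 Hab. destruct (I3 _ _ Hab) as (X1 & X2 & X3).
      rewrite upd_neq by (intro; subst; contradiction). auto.
    + intro z. rewrite Hrl. destruct (Nat.eq_dec z k).
      * subst. rewrite upd_eq. split; [intros [X _]; contradiction|intros [X _]; contradiction].
      * rewrite upd_neq by auto. tauto.
    + intros z Hz. destruct (Nat.eq_dec z k); [subst; eauto|].
      rewrite !upd_neq in * by auto. auto.
  -
    assert (HOk : ~ O k) by (intro X; destruct (I1 _ X); congruence).
    apply InvS1_intro with (rl := filter (fun z => negb (Nat.eqb z k')) rl); simpl; auto.
    + intros z [Hz _]. rewrite upd_neq; [auto|intro; subst; contradiction].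
    + intros z [Hz _]. rewrite upd_neq; [auto|intro; subst; contradiction].
    + intros a0 b0 [Hab [Ha Hb]]. destruct (I3 _ _ Hab) as (X1 & X2 & X3).
      rewrite upd_neq by (intro; subst; contradiction). auto.
    + apply NoDup_filter; auto.
    + intro z. rewrite filter_In, Hrl. destruct (Nat.eq_dec z k).
      * subst. rewrite upd_eq. split; [intros [[X _] _]; contradiction|intros [[X _] _]; contradiction].
      * rewrite upd_neq by auto. destruct (Nat.eqb_spec z k'); simpl; intuition congruence.
    + apply ordok_filter with lt; auto. intros a0 b0 [Hab [Ha Hb]]. split; auto.
      destruct (Nat.eqb_spec a0 k'); simpl; congruence.
    + intros z Hz. destruct (Nat.eq_dec z k); [subst; rewrite upd_eq in Hz; destruct Hz; discriminate|].
      rewrite !upd_neq in * by auto. auto.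
  -
    assert (HOk : ~ O k) by (intro X; destruct (I1 _ X); congruence).
    apply InvS1_intro with (rl := rl); simpl; auto.
    + intros z Hz. rewrite upd_neq; [auto|intro; subst; contradiction].
    + intros z Hz. rewrite upd_neq; [auto|intro; subst; contradiction].
    + intros a0 b0 Hab. destruct (I3 _ _ Hab) as (X1 & X2 & X3).
      rewrite upd_neq by (intro; subst; contradiction). auto.
    + intro z. rewrite Hrl. destruct (Nat.eq_dec z k).
      * subst. rewrite upd_eq. split; [intros [X _]; contradiction|intros [X _]; contradiction].
      * rewrite upd_neq by auto. tauto.
    + intros z Hz. destruct (Nat.eq_dec z k); [subst; rewrite upd_eq in Hz; destruct Hz; discriminate|].
      rewrite !upd_neq in * by auto. auto.
Qed.

Lemma inv_exec {V} (EMPTY : V) s tr s' : exec (AbsQ EMPTY) s tr s' -> InvS1 s -> InvS1 s'.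
Proof. induction 1; auto. intros; apply IHexec. eapply inv_step; eauto. exact H. Qed.

Lemma inv_init {V} (EMPTY : V) : InvS1 (linit (AbsQ EMPTY)).
Proof.
  apply InvS1_intro with (rl := []); simpl; try tauto; try constructor.
  intros k [X|X]; discriminate.
Qed.

Lemma forall2_exists {A B} (P : A -> B -> Prop) l :
  (forall x, In x l -> exists y, P x y) -> exists l', Forall2 P l l'.
Proof.
  induction l as [|x l IH]; intros H; [exists []; constructor|].
  destruct (H x (or_introl eq_refl)) as [y Hy].
  destruct IH as [l' Hl']; [intros; apply H; simpl; auto|].
  exists (y :: l'); constructor; auto.
Qed.

Lemma totality {V} (s1 : st1 V) : InvS1 s1 -> exists s0, BR s1 s0.
Proof.
  destruct s1 as [O lt l r c].
  intros (I1 & I2 & I3 & (rl & Hnd & Hrl & Hord) & I5); simpl in *.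
  set (i0 := fun z => match c z with Some A1 | Some A2 => option_map fst (l z) | _ => None end).
  set (c0 := fun z => match c z with
                      | None => None
                      | Some A1 => if excluded_middle_informative (O z) then Some A1_0 else Some A_0
                      | Some A2 => Some A2_0
                      | Some R1 => Some R1_0
                      | Some R2 => Some R2_0
                      | Some R3 => Some R3_0 end).
  destruct (@forall2_exists _ _ (fun k d => i0 k = Some d) rl) as [sg Hsg].
  { intros x Hx. apply Hrl in Hx. destruct Hx as [Hx Hc].
    destruct (I2 _ Hx) as (d & st & E1 & E2). exists d. unfold i0; rewrite Hc, E1; reflexivity. }
  exists (mkSt0 sg i0 r c0). exists rl. simpl.
  split; [auto|split; [auto|split; [auto|split; [|split; [|split]]]]]; auto.
  - intros k Hk; apply Hrl; auto.
  - intro k. unfold c0. destruct (c k) as [[]|] eqn:E; simpl; auto.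
    + destruct (excluded_middle_informative (O k)).
      * left; split; auto; split; auto. intro X; apply Hrl in X; destruct X; congruence.
      * right; right; auto.
    + split; auto. intros; apply Hrl; auto.
  - intro k. unfold encl, i0. destruct (c k) as [[]|] eqn:E; simpl; auto.
    + destruct (I5 k (or_introl E)) as [[d st] Hp]. exists d, st. rewrite Hp; auto.
    + destruct (I5 k (or_intror E)) as [[d st] Hp]. exists d, st. rewrite Hp; auto.
Qed.

Lemma BR_init {V} (EMPTY : V) s0 : BR (linit (AbsQ EMPTY)) s0 -> s0 = linit (AbsQ0 EMPTY).
Proof.
  destruct s0 as [sg i r c0].
  intros (ids & Hsg & Hnd & Hr & HO & Hc & He & Hord); simpl in *.
  destruct ids as [|x ids]; [|destruct (HO x (or_introl eq_refl))].
  inversion Hsg; subst. f_equal.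
  - extensionality z. exact (He z).
  - extensionality z. exact (Hc z).
Qed.

Lemma BR_intro {V} (s1 : st1 V) s0 ids :
    Forall2 (fun k d => in0 s0 k = Some d) ids (sigma0 s0) ->
    NoDup ids ->
    rv0 s0 = rv1 s1 ->
    (forall k, In k ids -> O1 s1 k) ->
    (forall k, cprel (O1 s1 k) (In k ids) (cpf1 s1 k) (cpf0 s0 k)) ->
    (forall k, encl (cpf1 s1 k) (in0 s0 k) (ell1 s1 k)) ->
    ordok (lt1 s1) ids -> BR s1 s0.
Proof. intros; exists ids; auto 10. Qed.

Lemma nodup_disj {A} (l1 l2 : list A) x : NoDup (l1 ++ l2) -> In x l1 -> In x l2 -> False.
Proof.
  induction l1 as [|a l1 IH]; simpl; intros H H1 H2; [auto|]. inversion H as [|a' l' Hn Hnd]; subst.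
  destruct H1 as [E|E]; [subst|eauto]. apply Hn; apply in_or_app; auto.
Qed.

Ltac updtac := unfold upd; repeat match goal with
  | |- context [Nat.eqb ?z ?k] => destruct (Nat.eqb_spec z k); subst end; auto.

Lemma bwd_step {V} (EMPTY : V) s1 act s1' s0' :
  InvS1 s1 -> step1 EMPTY s1 act s1' -> BR s1' s0' ->
  exists s0 tr, BR s1 s0 /\ exec (AbsQ0 EMPTY) s0 tr s0' /\
    filter (@is_call_or_ret V) tr = filter (@is_call_or_ret V) [act].
Proof.
  intros HI Hs HB. destruct s0' as [sg' i' r' c0'].
  destruct Hs; destruct HI as (I1 & I2 & I3 & (rl & Hnd0 & Hrl & Hord0) & I5);
    destruct HB as (ids & Hsg & Hnd & Hr & HO & Hc & He & Hord); simpl in *.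
  -
    assert (HOk : ~ O k) by (intro X; destruct (I1 _ X); congruence).
    assert (Hck := Hc k). rewrite upd_eq in Hck; simpl in Hck.
    assert (Hek := He k). rewrite !upd_eq in Hek; simpl in Hek.
    destruct Hek as (d1 & st1 & Hik & Hlk). injection Hlk; intros; subst d1 st1.
    set (i0 := fun z => if Nat.eqb z k then None else i' z).
    destruct Hck as [(_ & Hkin & Hc0k)|[(Hkin & Hc0k)|(X & _)]]; [| |exfalso; apply X; auto].
    + set (c00 := fun z => if Nat.eqb z k then None else c0' z).
      exists (mkSt0 sg' i0 r' c00), [InvEnq d k]; split; [|split; [|reflexivity]].
      * apply BR_intro with (ids := ids); simpl; auto.
        -- eapply Forall2_impl_in; [exact Hsg|]. intros x y Hx Hxy. unfold i0.
           destruct (Nat.eqb_spec x k); [subst; contradiction|auto].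
        -- intros z Hz. destruct (HO z Hz); [auto|subst; contradiction].
        -- intro z. unfold c00. destruct (Nat.eqb_spec z k); [subst; rewrite H; reflexivity|].
           generalize (Hc z). rewrite upd_neq by auto. apply cprel_iff; [|tauto]. intuition.
        -- intro z. unfold i0. destruct (Nat.eqb_spec z k); [subst; rewrite H; reflexivity|].
           generalize (He z). rewrite !upd_neq by auto. auto.
        -- apply ordok_mono with (lt := fun a b => lt a b \/ (compO O l a /\ b = k)); auto.
      * apply exec_eq with (mkSt0 sg' (upd i0 k d) r' (upd c00 k A1_0)).
        -- apply exec_one; simpl; constructor; auto. unfold c00; rewrite Nat.eqb_refl; auto.
        -- f_equal; extensionality z; unfold i0, c00; updtac.
    + destruct (in_split _ _ Hkin) as (l1 & l2 & Eids). subst ids.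
      apply Forall2_app_inv_l in Hsg. destruct Hsg as (sl1 & sl2' & F1 & F2 & Esg).
      inversion F2 as [|k' d1 l2' sl2 Hd1 F3]; subst. rewrite Hik in Hd1; injection Hd1; intros; subst d1.
      assert (Hnk : ~ In k (l1 ++ l2)) by (apply NoDup_remove_2; auto).
      assert (Hnd2 : NoDup l2) by (apply NoDup_app_remove_l in Hnd; inversion Hnd; auto).
      assert (Hnd1 : NoDup l1) by (apply NoDup_app_remove_r in Hnd; auto).
      assert (Hl1 : forall z, In z l1 -> z <> k /\ O z /\ c z = Some A1 /\ c0' z = Some A_0).
      { intros z Hz.
        assert (Hzk : z <> k) by (intro; subst; apply Hnk; apply in_or_app; auto).
        assert (HzO : O z) by (destruct (HO z (in_or_app _ _ _ (or_introl Hz))); [auto|congruence]).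
        assert (Hcz : c z = Some A1).
        { destruct (I1 _ HzO) as [X|X]; auto. exfalso.
          destruct (I2 _ HzO) as (d2 & st2 & G1 & G2). apply G2 in X. subst st2.
          assert (In z l2).
          { eapply ordok_in; [exact Hord|]. right. split; auto. split; auto. exists d2; auto. }
          apply (@nodup_disj _ _ _ _ Hnd Hz). right; auto. }
        generalize (Hc z). rewrite upd_neq by auto. rewrite Hcz. simpl.
        intros [(_ & X & _)|[(_ & X)|(X & _)]].
        - exfalso; apply X; apply in_or_app; auto.
        - auto.
        - exfalso; apply X; auto. }
      set (c00 := fun z => if Nat.eqb z k then None else if in_dec Nat.eq_dec z l1 then Some A1_0 else c0' z).
      destruct (@linenqs V EMPTY l1 sl1 (d :: sl2) (upd i0 k d) r (upd (upd c00 k A1_0) k A_0))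
        as (trl & X1 & X2).
      { auto. }
      { eapply Forall2_impl_in; [exact F1|]. intros x y Hx Hxy. destruct (Hl1 x Hx) as [Hxk _].
        unfold i0; updtac; congruence. }
      { intros z Hz. destruct (Hl1 z Hz) as [Hzk _]. rewrite !upd_neq by auto. unfold c00.
        destruct (Nat.eqb_spec z k); [congruence|]. destruct (in_dec Nat.eq_dec z l1); [auto|contradiction]. }
      exists (mkSt0 sl2 i0 r c00), ([InvEnq d k; LinEnq d k] ++ trl); split; [|split].
      * apply BR_intro with (ids := l2); simpl; auto.
        -- eapply Forall2_impl_in; [exact F3|]. intros x y Hx Hxy. unfold i0.
           destruct (Nat.eqb_spec x k); [subst; exfalso; apply Hnk; apply in_or_app; auto|auto].
        -- intros z Hz. destruct (HO z (in_or_app _ _ _ (or_intror (or_intror Hz : In z (k :: l2))))); [auto|subst].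
           exfalso; apply Hnk; apply in_or_app; auto.
        -- intro z. unfold c00. destruct (Nat.eqb_spec z k); [subst; rewrite H; reflexivity|].
           destruct (in_dec Nat.eq_dec z l1) as [Hz|Hz].
           ++ destruct (Hl1 z Hz) as (_ & X1' & X2' & _). rewrite X2'. simpl. left; split; auto.
              split; auto. intro; apply (@nodup_disj _ _ _ _ Hnd Hz); right; auto.
           ++ generalize (Hc z). rewrite upd_neq by auto. apply cprel_iff; [intuition|].
              split; [intro X; apply in_app_or in X; destruct X as [X|[X|X]]; [contradiction|congruence|auto]|].
              intro; apply in_or_app; right; right; auto.
        -- intro z. unfold i0. destruct (Nat.eqb_spec z k); [subst; rewrite H; reflexivity|].
           generalize (He z). rewrite !upd_neq by auto. auto.
        -- apply ordok_app_r in Hord. destruct Hord as [_ Hord].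
           apply ordok_mono with (lt := fun a b => lt a b \/ (compO O l a /\ b = k)); auto.
      * eapply exec_app; [|apply exec_eq with (1 := X1)].
        -- econstructor; [|apply exec_one]; simpl; constructor; auto.
           ++ unfold c00; rewrite Nat.eqb_refl; auto.
           ++ apply upd_eq.
           ++ apply upd_eq.
        -- f_equal; extensionality z; unfold i0, c00.
           ++ updtac; congruence.
           ++ destruct (in_dec Nat.eq_dec z l1) as [Hz|Hz].
              ** destruct (Hl1 z Hz) as (_ & _ & _ & Y). auto.
              ** updtac. destruct (in_dec Nat.eq_dec z l1); [contradiction|auto].
      * simpl. rewrite X2. reflexivity.
  -
    assert (Hck := Hc k). rewrite upd_eq in Hck; simpl in Hck.
    assert (Hek := He k). rewrite upd_eq in Hek; simpl in Hek.
    set (c00 := fun z => if Nat.eqb z k then None else c0' z).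
    exists (mkSt0 sg' i' r' c00), [InvDeq k]; split; [|split; [|reflexivity]].
    + apply BR_intro with (ids := ids); simpl; auto.
      * intro z. unfold c00. destruct (Nat.eqb_spec z k); [subst; rewrite H; reflexivity|].
        generalize (Hc z). rewrite upd_neq by auto. auto.
      * intro z. destruct (Nat.eq_dec z k); [subst; rewrite H; exact Hek|].
        generalize (He z). rewrite !upd_neq by auto. auto.
    + apply exec_eq with (mkSt0 sg' i' r' (upd c00 k R1_0)).
      * apply exec_one; simpl; constructor; auto. unfold c00; rewrite Nat.eqb_refl; auto.
      * f_equal; extensionality z; unfold c00; updtac; congruence.
  -
    assert (Hck := Hc k). rewrite upd_eq in Hck; simpl in Hck.
    assert (Hek := He k). rewrite upd_eq in Hek; simpl in Hek.
    set (c00 := fun z => if Nat.eqb z k then Some R2_0 else c0' z).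
    exists (mkSt0 sg' i' r' c00), [RetDeq d k]; split; [|split; [|reflexivity]].
    + apply BR_intro with (ids := ids); simpl; auto.
      * intro z. unfold c00. destruct (Nat.eqb_spec z k); [subst; rewrite H; reflexivity|].
        generalize (Hc z). rewrite upd_neq by auto. auto.
      * intro z. destruct (Nat.eq_dec z k); [subst; rewrite H; exact Hek|].
        generalize (He z). rewrite !upd_neq by auto. auto.
    + apply exec_eq with (mkSt0 sg' i' r' (upd c00 k R3_0)).
      * apply exec_one; simpl; constructor; auto.
        -- unfold c00; rewrite Nat.eqb_refl; auto.
        -- rewrite Hr; auto.
      * f_equal; extensionality z; unfold c00; updtac; congruence.
  -
    assert (Hck := Hc k). rewrite upd_eq in Hck; simpl in Hck. destruct Hck as [Hc0k Hin].
    assert (Hek := He k). rewrite !upd_eq in Hek; simpl in Hek.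
    destruct Hek as (d1 & st1 & Hik & Hlk). injection Hlk; intros; subst d1 st1.
    set (c00 := fun z => if Nat.eqb z k then Some A_0 else c0' z).
    exists (mkSt0 sg' i' r' c00), [RetEnq k]; split; [|split; [|reflexivity]].
    + apply BR_intro with (ids := ids); simpl; auto.
      * intro z. unfold c00. destruct (Nat.eqb_spec z k); [subst; rewrite H; simpl; auto|].
        generalize (Hc z). rewrite upd_neq by auto. auto.
      * intro z. destruct (Nat.eq_dec z k); [subst; rewrite H; simpl; eauto|].
        generalize (He z). rewrite !upd_neq by auto. auto.
    + apply exec_eq with (mkSt0 sg' i' r' (upd c00 k A2_0)).
      * apply exec_one; simpl; constructor; auto. unfold c00; rewrite Nat.eqb_refl; auto.
      * f_equal; extensionality z; unfold c00; updtac; congruence.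
  -
    assert (Hck := Hc k). rewrite upd_eq in Hck; simpl in Hck. destruct Hck as [Hc0k Hin].
    assert (Hek := He k). rewrite !upd_eq in Hek; simpl in Hek.
    set (c00 := fun z => if Nat.eqb z k then Some A_0 else c0' z).
    exists (mkSt0 sg' i' r' c00), [RetEnq k]; split; [|split; [|reflexivity]].
    + apply BR_intro with (ids := ids); simpl; auto.
      * intro z. unfold c00. destruct (Nat.eqb_spec z k); [subst; rewrite H; simpl; auto|].
        generalize (Hc z). rewrite upd_neq by auto. auto.
      * intro z. destruct (Nat.eq_dec z k); [subst; rewrite H; simpl; eauto|].
        generalize (He z). rewrite !upd_neq by auto. auto.
    + apply exec_eq with (mkSt0 sg' i' r' (upd c00 k A2_0)).
      * apply exec_one; simpl; constructor; auto. unfold c00; rewrite Nat.eqb_refl; auto.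
      * f_equal; extensionality z; unfold c00; updtac; congruence.
  -
    destruct H1 as [HOk' Hmin].
    assert (Hkk : k <> k') by (intro; subst; destruct (I1 _ HOk'); congruence).
    assert (Hck := Hc k). rewrite upd_eq in Hck; simpl in Hck.
    assert (Hek := He k). rewrite upd_eq in Hek; simpl in Hek.
    assert (Hk'ids : ~ In k' ids) by (intro X; destruct (HO _ X); auto).
    assert (Hik' : i' k' = Some d).
    { generalize (He k'). rewrite upd_neq by auto. destruct (I1 _ HOk') as [X|X]; rewrite X; simpl;
      intros (d1 & st1 & Y1 & Y2); rewrite H2 in Y2; injection Y2; intros; subst; auto. }
    set (c00 := fun z => if Nat.eqb z k then Some R1_0 else c0' z).
    exists (mkSt0 (sg' ++ [d]) i' r c00), [LinDeq d k]; split; [|split; [|reflexivity]].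
    + apply BR_intro with (ids := ids ++ [k']); simpl; auto.
      * apply Forall2_app; auto.
      * apply NoDup_app; auto; [constructor; auto; constructor|].
        intros a0 Ha0 [X|[]]; subst; contradiction.
      * intros z Hz. apply in_app_or in Hz. destruct Hz as [Hz|[Hz|[]]]; [apply HO; auto|subst; auto].
      * intro z. unfold c00. destruct (Nat.eqb_spec z k); [subst; rewrite H; reflexivity|].
        generalize (Hc z). rewrite upd_neq by auto. destruct (Nat.eq_dec z k').
        -- subst z. destruct (I1 _ HOk') as [X|X]; rewrite X; simpl.
           ++ intros [(Y & _)|[(Y & _)|(_ & Y)]]; [tauto|contradiction|].
              right; left; split; auto. apply in_or_app; right; left; auto.
           ++ intros [Y _]; split; auto. intros _; apply in_or_app; right; left; auto.
        -- apply cprel_iff; [tauto|]. split; [intro; apply in_or_app; auto|].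
           intro X; apply in_app_or in X; destruct X as [X|[X|[]]]; [auto|congruence].
      * intro z. destruct (Nat.eq_dec z k); [subst; rewrite H; exact Hek|].
        generalize (He z). rewrite !upd_neq by auto. auto.
      * apply ordok_snoc with (lt' := fun a b => lt a b /\ a <> k' /\ b <> k'); auto.
        -- intros a0 b0 Hb Hab. destruct (Nat.eq_dec a0 k'); [left; auto|right].
           split; auto. split; auto. intro; subst; contradiction.
        -- intros a0 Hab. apply Hmin. exists a0; split; auto. apply (I3 _ _ Hab).
    + apply exec_eq with (mkSt0 sg' i' (upd r k d) (upd c00 k R2_0)).
      * apply exec_one; simpl; constructor; auto. unfold c00; rewrite Nat.eqb_refl; auto.
      * f_equal; [auto|]. extensionality z; unfold c00; updtac; congruence.
  -
    assert (Hck := Hc k). rewrite upd_eq in Hck; simpl in Hck.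
    assert (Hek := He k). rewrite upd_eq in Hek; simpl in Hek.
    assert (Hids : forall z, In z ids -> z <> k /\ O z /\ c z = Some A1 /\ c0' z = Some A_0).
    { intros z Hz. assert (HzO := HO z Hz).
      assert (Hzk : z <> k) by (intro; subst; destruct (I1 _ HzO); congruence).
      assert (Hcz : c z = Some A1).
      { destruct (I1 _ HzO) as [X|X]; auto. destruct (I2 _ HzO) as (d2 & st2 & G1 & G2).
        apply G2 in X; subst. destruct (H0 _ HzO) as [d3 G3]. congruence. }
      generalize (Hc z). rewrite upd_neq by auto. rewrite Hcz; simpl.
      intros [(_ & X & _)|[(_ & X)|(X & _)]]; [contradiction|auto|contradiction]. }
    set (c00 := fun z => if Nat.eqb z k then Some R1_0 else if in_dec Nat.eq_dec z ids then Some A1_0 else c0' z).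
    destruct (@linenqs V EMPTY ids sg' [] i' (upd r k EMPTY) (upd c00 k R2_0)) as (trl & X1 & X2); auto.
    { intros z Hz. destruct (Hids z Hz) as [Hzk _]. rewrite upd_neq by auto. unfold c00.
      destruct (Nat.eqb_spec z k); [congruence|]. destruct (in_dec Nat.eq_dec z ids); [auto|contradiction]. }
    exists (mkSt0 [] i' r c00), ([LinDeq EMPTY k] ++ trl); split; [|split].
    + apply BR_intro with (ids := []); simpl; auto; [constructor|tauto| | ].
      * intro z. unfold c00. destruct (Nat.eqb_spec z k); [subst; rewrite H; reflexivity|].
        destruct (in_dec Nat.eq_dec z ids) as [Hz|Hz].
        -- destruct (Hids z Hz) as (_ & Y1 & Y2 & _). rewrite Y2; simpl. left; auto.
        -- generalize (Hc z). rewrite upd_neq by auto. apply cprel_iff; [tauto|]. simpl; tauto.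
      * intro z. destruct (Nat.eq_dec z k); [subst; rewrite H; exact Hek|].
        generalize (He z). rewrite !upd_neq by auto. auto.
    + eapply exec_app; [apply exec_one; simpl; constructor|apply exec_eq with (1 := X1)].
      * unfold c00; rewrite Nat.eqb_refl; auto.
      * rewrite app_nil_r. f_equal; [auto|]. extensionality z.
        destruct (in_dec Nat.eq_dec z ids) as [Hz|Hz]; [destruct (Hids z Hz) as (_ & _ & _ & Y); auto|].
        unfold c00; updtac. destruct (in_dec Nat.eq_dec z ids); [contradiction|auto].
    + simpl. rewrite X2. reflexivity.
Qed.

Lemma bwd_exec {V} (EMPTY : V) tr : forall s1, exec (AbsQ EMPTY) (linit (AbsQ EMPTY)) tr s1 ->
  forall s0, BR s1 s0 -> exists tr0, exec (AbsQ0 EMPTY) (linit (AbsQ0 EMPTY)) tr0 s0 /\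
     filter (@is_call_or_ret V) tr0 = filter (@is_call_or_ret V) tr.
Proof.
  induction tr as [|a tr IH] using rev_ind; intros s1 Hx s0 HB.
  - inversion Hx; subst. apply BR_init in HB. subst. exists []; split; [constructor|reflexivity].
  - apply exec_snoc_inv in Hx. destruct Hx as (s & Hx & Hst).
    assert (HI : InvS1 s) by (eapply inv_exec; [exact Hx|apply inv_init]).
    destruct (bwd_step HI Hst HB) as (s0p & t & HBp & Ht & Hf).
    destruct (IH _ Hx _ HBp) as (tr0 & E1 & E2).
    exists (tr0 ++ t); split; [eapply exec_app; eauto|].
    rewrite !filter_app, E2, Hf. reflexivity.
Qed.

Lemma refines_1_0 {V} (EMPTY : V) : refines (AbsQ EMPTY) (AbsQ0 EMPTY).
Proof.
  intros h [tr [[s Hs] Hh]].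
  assert (HI : InvS1 s) by (eapply inv_exec; [exact Hs|apply inv_init]).
  destruct (totality HI) as [s0 HB].
  destruct (bwd_exec Hs HB) as (tr0 & E1 & E2).
  exists tr0; split; [exists s0; auto|congruence].
Qed.

Theorem theorem3 (V : Type) (EMPTY : V) :
  refines (AbsQ EMPTY) (AbsQ0 EMPTY) /\ refines (AbsQ0 EMPTY) (AbsQ EMPTY).
Proof. split; [apply refines_1_0|apply refines_0_1]. Qed.
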